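(* Consider the single-armed lazy restless bandit described in the context with fixed subsidy $\eta$ and $p_{0,0}<p_{1,0}$, and let $b=\min\left\{1,\frac{R_1-R_0}{\rho_1-\rho_0}\right\}$. Then $\pi\mapsto V_S(\pi)-V_{NS}(\pi)$ is decreasing on $[0,1]$ under either of the following conditions: (1) for any $K>1$, when $0<p_{1,0}-p_{0,0}<b/5$ and $\beta\in(0,1)$; (2) for any $K>1$, when $\beta\in(0,b/5)$.
   Context: Single-armed lazy restless bandit: an arm has a hidden state in $\{0,1\}$ evolving as a two-state Markov chain with transition probabilities $p_{i,j}$ ($p_{i,0}+p_{i,1}=1$). During each session the chain makes exactly $K\ge1$ transitions. In each session the decision maker plays the arm or not. If played with the arm in state $i$ at session start, an ACK is received with probability $\rho_i\in[0,1]$ and the expected reward is $R_i$; if not played, subsidy $\eta$ is received and nothing observed. Discount $\beta\in(0,1)$. Standing assumptions: $\rho_0<\rho_1$, $R_0<R_1$. Belief $\pi\in[0,1]$ = probability of state $0$. $R_S(\pi)=\pi R_0+(1-\pi)R_1$, $\rho(\pi)=\pi\rho_0+(1-\pi)\rho_1$, $\gamma_1(\pi)=\frac{(1-\pi)\rho_1p_{1,0}+\pi\rho_0p_{0,0}}{\rho_1(1-\pi)+\rho_0\pi}$, $\gamma_0(\pi)=\frac{(1-\pi)(1-\rho_1)p_{1,0}+\pi(1-\rho_0)p_{0,0}}{(1-\rho_1)(1-\pi)+(1-\rho_0)\pi}$, $\gamma_2(\pi)=(p_{0,0}-p_{1,0})^K\pi+p_{1,0}\sum_{j=0}^{K-1}(p_{0,0}-p_{1,0})^j$.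 $V_S,V_{NS},V$ are the unique bounded solution of $V_S(\pi)=R_S(\pi)+\beta\big(\rho(\pi)V(\gamma_1(\pi))+(1-\rho(\pi))V(\gamma_0(\pi))\big)$, $V_{NS}(\pi)=\eta+\beta V(\gamma_2(\pi))$, $V(\pi)=\max\{V_S(\pi),V_{NS}(\pi)\}$ (a term with zero coefficient is taken to be $0$). *)

(* Defs.v *)
From Stdlib Require Import Reals.
Open Scope R_scope.

Fixpoint geom_sum (a : R) (n : nat) : R :=
  match n with
  | O => 0
  | S m => geom_sum a m + a ^ m
  end.

(* Expected immediate reward when playing, belief pi = P(state 0). *)
Definition R_S (R0 R1 pi : R) : R := pi * R0 + (1 - pi) * R1.

(* Probability of an ACK when playing. *)
Definition rho (rho0 rho1 pi : R) : R := pi * rho0 + (1 - pi) * rho1.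

(* Belief update after playing and receiving an ACK. *)
Definition gamma1 (p00 p10 rho0 rho1 pi : R) : R :=
  ((1 - pi) * rho1 * p10 + pi * rho0 * p00) / (rho1 * (1 - pi) + rho0 * pi).

(* Belief update after playing and receiving no ACK. *)
Definition gamma0 (p00 p10 rho0 rho1 pi : R) : R :=
  ((1 - pi) * (1 - rho1) * p10 + pi * (1 - rho0) * p00)
  / ((1 - rho1) * (1 - pi) + (1 - rho0) * pi).

(* Belief update after K transitions without playing. *)
Definition gamma2 (p00 p10 : R) (K : nat) (pi : R) : R :=
  (p00 - p10) ^ K * pi + p10 * geom_sum (p00 - p10) K.

(* (VS, VNS, V) solve the Bellman system on [0,1], V bounded on [0,1].
   A term with zero coefficient is automatically 0 (0 * anything = 0). *)
Definition bellman_solution (p00 p10 rho0 rho1 R0 R1 eta beta : R) (K : nat)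
    (VS VNS V : R -> R) : Prop :=
  (exists M, forall pi, 0 <= pi <= 1 -> Rabs (V pi) <= M) /\
  (forall pi, 0 <= pi <= 1 ->
     VS pi = R_S R0 R1 pi
             + beta * (rho rho0 rho1 pi * V (gamma1 p00 p10 rho0 rho1 pi)
                       + (1 - rho rho0 rho1 pi) * V (gamma0 p00 p10 rho0 rho1 pi))) /\
  (forall pi, 0 <= pi <= 1 -> VNS pi = eta + beta * V (gamma2 p00 p10 K pi)) /\
  (forall pi, 0 <= pi <= 1 -> V pi = Rmax (VS pi) (VNS pi)).

(* Main.v *)
Require Import Defs.
From Stdlib Require Import Reals Lra Psatz.
Open Scope R_scope.

Lemma pow_abs_le1 (x : R) (n : nat) : 0 <= x <= 1 -> 0 <= x ^ n <= 1.
Proof. intros H; induction n; simpl; nra. Qed.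

Lemma Rabs_inv_le (x a : R) : Rabs x <= a -> - a <= x <= a.
Proof. split_Rabs; lra. Qed.

Lemma Rmax_diff (a b c d e : R) : Rabs (a - c) <= e -> Rabs (b - d) <= e ->
  Rabs (Rmax a b - Rmax c d) <= e.
Proof. unfold Rmax; destruct (Rle_dec a b), (Rle_dec c d); split_Rabs; lra. Qed.

Definition N1 p00 p10 rho0 rho1 pi := (1 - pi) * rho1 * p10 + pi * rho0 * p00.
Definition N0 p00 p10 rho0 rho1 pi := (1 - pi) * (1 - rho1) * p10 + pi * (1 - rho0) * p00.

Definition fW p00 p10 rho0 rho1 (W : R -> R) t :=
  rho rho0 rho1 t * W (gamma1 p00 p10 rho0 rho1 t)
  + (1 - rho rho0 rho1 t) * W (gamma0 p00 p10 rho0 rho1 t).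

Definition TW p00 p10 rho0 rho1 R0 R1 eta beta K (W : R -> R) t :=
  Rmax (R_S R0 R1 t + beta * fW p00 p10 rho0 rho1 W t)
       (eta + beta * W (gamma2 p00 p10 K t)).

Definition Supp (L : R) (W : R -> R) :=
  forall t, 0 <= t <= 1 -> exists m, -L <= m <= L /\
    forall s, 0 <= s <= 1 -> W t + m * (s - t) <= W s.

Lemma gamma2_step p00 p10 K pi :
  gamma2 p00 p10 (S K) pi = gamma2 p00 p10 K (p10 + (p00 - p10) * pi).
Proof. unfold gamma2; simpl. ring. Qed.

Lemma gamma2_range p00 p10 K : 0 <= p00 <= 1 -> 0 <= p10 <= 1 ->
  forall pi, 0 <= pi <= 1 -> 0 <= gamma2 p00 p10 K pi <= 1.
Proof.
  intros H0 H1; induction K; intros pi Hpi.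
  - unfold gamma2; simpl; lra.
  - rewrite gamma2_step; apply IHK.
    assert (0 <= pi * p00 <= pi) by (split; nra).
    assert (0 <= (1 - pi) * p10 <= 1 - pi) by (split; nra). nra.
Qed.

Lemma gamma2_diff p00 p10 K s t :
  gamma2 p00 p10 K s - gamma2 p00 p10 K t = (p00 - p10) ^ K * (s - t).
Proof. unfold gamma2; ring. Qed.

Lemma rho_range rho0 rho1 t : 0 <= rho0 <= 1 -> 0 <= rho1 <= 1 -> 0 <= t <= 1 ->
  0 <= rho rho0 rho1 t <= 1.
Proof. unfold rho; intros; nra. Qed.

Lemma w1g1 p00 p10 rho0 rho1 t :
  0 <= p00 <= 1 -> 0 <= p10 <= 1 -> 0 <= rho0 <= 1 -> 0 <= rho1 <= 1 -> 0 <= t <= 1 ->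
  rho rho0 rho1 t * gamma1 p00 p10 rho0 rho1 t = N1 p00 p10 rho0 rho1 t.
Proof.
  intros. unfold gamma1.
  replace (rho1 * (1 - t) + rho0 * t) with (rho rho0 rho1 t) by (unfold rho; ring).
  fold (N1 p00 p10 rho0 rho1 t).
  destruct (Req_dec (rho rho0 rho1 t) 0) as [E|E].
  - rewrite E. assert (N1 p00 p10 rho0 rho1 t = 0).
    { unfold N1; unfold rho in E.
      assert (0 <= (1 - t) * rho1) by (apply Rmult_le_pos; lra).
      assert (0 <= t * rho0) by (apply Rmult_le_pos; lra).
      assert (Ha : (1 - t) * rho1 = 0) by lra. assert (Hb : t * rho0 = 0) by lra.
      replace ((1 - t) * rho1 * p10) with (((1 - t) * rho1) * p10) by ring.
      replace (t * rho0 * p00) with ((t * rho0) * p00) by ring.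
      rewrite Ha, Hb; ring. }
    rewrite H4. unfold Rdiv. ring.
  - field. auto.
Qed.

Lemma w0g0 p00 p10 rho0 rho1 t :
  0 <= p00 <= 1 -> 0 <= p10 <= 1 -> 0 <= rho0 <= 1 -> 0 <= rho1 <= 1 -> 0 <= t <= 1 ->
  (1 - rho rho0 rho1 t) * gamma0 p00 p10 rho0 rho1 t = N0 p00 p10 rho0 rho1 t.
Proof.
  intros. unfold gamma0.
  replace ((1 - rho1) * (1 - t) + (1 - rho0) * t) with (1 - rho rho0 rho1 t) by (unfold rho; ring).
  fold (N0 p00 p10 rho0 rho1 t).
  destruct (Req_dec (1 - rho rho0 rho1 t) 0) as [E|E].
  - rewrite E. assert (N0 p00 p10 rho0 rho1 t = 0).
    { unfold N0; unfold rho in E.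
      assert (0 <= (1 - t) * (1 - rho1)) by (apply Rmult_le_pos; lra).
      assert (0 <= t * (1 - rho0)) by (apply Rmult_le_pos; lra).
      assert (Ha : (1 - t) * (1 - rho1) = 0) by lra. assert (Hb : t * (1 - rho0) = 0) by lra.
      replace ((1 - t) * (1 - rho1) * p10) with (((1 - t) * (1 - rho1)) * p10) by ring.
      replace (t * (1 - rho0) * p00) with ((t * (1 - rho0)) * p00) by ring.
      rewrite Ha, Hb; ring. }
    rewrite H4. unfold Rdiv. ring.
  - field. auto.
Qed.

Lemma g1_range p00 p10 rho0 rho1 t :
  0 <= p00 <= 1 -> 0 <= p10 <= 1 -> 0 <= rho0 <= 1 -> 0 <= rho1 <= 1 -> 0 <= t <= 1 ->
  p00 <= p10 -> 0 < rho rho0 rho1 t ->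
  p00 <= gamma1 p00 p10 rho0 rho1 t <= p10.
Proof.
  intros. pose proof (w1g1 p00 p10 rho0 rho1 t H H0 H1 H2 H3) as E.
  set (g := gamma1 p00 p10 rho0 rho1 t) in *. set (r := rho rho0 rho1 t) in *.
  assert (p00 * r <= N1 p00 p10 rho0 rho1 t <= p10 * r).
  { unfold N1, r, rho.
    assert (0 <= (1 - t) * rho1 * (p10 - p00)) by
      (apply Rmult_le_pos; [apply Rmult_le_pos|]; lra).
    assert (0 <= t * rho0 * (p10 - p00)) by
      (apply Rmult_le_pos; [apply Rmult_le_pos|]; lra).
    split; nra. }
  split; nra.
Qed.

Lemma g0_range p00 p10 rho0 rho1 t :
  0 <= p00 <= 1 -> 0 <= p10 <= 1 -> 0 <= rho0 <= 1 -> 0 <= rho1 <= 1 -> 0 <= t <= 1 ->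
  p00 <= p10 -> 0 < 1 - rho rho0 rho1 t ->
  p00 <= gamma0 p00 p10 rho0 rho1 t <= p10.
Proof.
  intros. pose proof (w0g0 p00 p10 rho0 rho1 t H H0 H1 H2 H3) as E.
  set (g := gamma0 p00 p10 rho0 rho1 t) in *. set (r := rho rho0 rho1 t) in *.
  assert (p00 * (1 - r) <= N0 p00 p10 rho0 rho1 t <= p10 * (1 - r)).
  { unfold N0, r, rho.
    assert (0 <= (1 - t) * (1 - rho1) * (p10 - p00)) by
      (apply Rmult_le_pos; [apply Rmult_le_pos|]; lra).
    assert (0 <= t * (1 - rho0) * (p10 - p00)) by
      (apply Rmult_le_pos; [apply Rmult_le_pos|]; lra).
    split; nra. }
  split; nra.
Qed.

Lemma g1_01 p00 p10 rho0 rho1 t :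
  0 <= p00 <= 1 -> 0 <= p10 <= 1 -> 0 <= rho0 <= 1 -> 0 <= rho1 <= 1 -> 0 <= t <= 1 ->
  p00 <= p10 -> 0 <= gamma1 p00 p10 rho0 rho1 t <= 1.
Proof.
  intros. pose proof (rho_range rho0 rho1 t H1 H2 H3).
  destruct (Req_dec (rho rho0 rho1 t) 0) as [E|E].
  - unfold gamma1.
    replace (rho1 * (1 - t) + rho0 * t) with (rho rho0 rho1 t) by (unfold rho; ring).
    fold (N1 p00 p10 rho0 rho1 t).
    assert (N1 p00 p10 rho0 rho1 t = 0).
    { unfold N1; unfold rho in E.
      assert (0 <= (1 - t) * rho1) by (apply Rmult_le_pos; lra).
      assert (0 <= t * rho0) by (apply Rmult_le_pos; lra).
      assert (Ha : (1 - t) * rho1 = 0) by lra. assert (Hb : t * rho0 = 0) by lra.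
      replace ((1 - t) * rho1 * p10) with (((1 - t) * rho1) * p10) by ring.
      replace (t * rho0 * p00) with ((t * rho0) * p00) by ring.
      rewrite Ha, Hb; ring. }
    rewrite H6, E. unfold Rdiv. lra.
  - pose proof (g1_range p00 p10 rho0 rho1 t H H0 H1 H2 H3 H4 ltac:(lra)). lra.
Qed.

Lemma g0_01 p00 p10 rho0 rho1 t :
  0 <= p00 <= 1 -> 0 <= p10 <= 1 -> 0 <= rho0 <= 1 -> 0 <= rho1 <= 1 -> 0 <= t <= 1 ->
  p00 <= p10 -> 0 <= gamma0 p00 p10 rho0 rho1 t <= 1.
Proof.
  intros. pose proof (rho_range rho0 rho1 t H1 H2 H3).
  destruct (Req_dec (1 - rho rho0 rho1 t) 0) as [E|E].
  - unfold gamma0.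
    replace ((1 - rho1) * (1 - t) + (1 - rho0) * t) with (1 - rho rho0 rho1 t) by (unfold rho; ring).
    fold (N0 p00 p10 rho0 rho1 t).
    assert (N0 p00 p10 rho0 rho1 t = 0).
    { unfold N0; unfold rho in E.
      assert (0 <= (1 - t) * (1 - rho1)) by (apply Rmult_le_pos; lra).
      assert (0 <= t * (1 - rho0)) by (apply Rmult_le_pos; lra).
      assert (Ha : (1 - t) * (1 - rho1) = 0) by lra. assert (Hb : t * (1 - rho0) = 0) by lra.
      replace ((1 - t) * (1 - rho1) * p10) with (((1 - t) * (1 - rho1)) * p10) by ring.
      replace (t * (1 - rho0) * p00) with ((t * (1 - rho0)) * p00) by ring.
      rewrite Ha, Hb; ring. }
    rewrite H6, E. unfold Rdiv. lra.
  - pose proof (g0_range p00 p10 rho0 rho1 t H H0 H1 H2 H3 H4 ltac:(lra)). lra.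
Qed.

Lemma g0_le_g1 p00 p10 rho0 rho1 t :
  0 <= p00 <= 1 -> 0 <= p10 <= 1 -> 0 <= rho0 <= 1 -> 0 <= rho1 <= 1 -> 0 <= t <= 1 ->
  p00 <= p10 -> rho0 <= rho1 -> 0 < rho rho0 rho1 t -> 0 < 1 - rho rho0 rho1 t ->
  gamma0 p00 p10 rho0 rho1 t <= gamma1 p00 p10 rho0 rho1 t.
Proof.
  intros.
  pose proof (w1g1 p00 p10 rho0 rho1 t H H0 H1 H2 H3) as E1.
  pose proof (w0g0 p00 p10 rho0 rho1 t H H0 H1 H2 H3) as E0.
  set (g1 := gamma1 p00 p10 rho0 rho1 t) in *.
  set (g0 := gamma0 p00 p10 rho0 rho1 t) in *.
  assert (Hk : (rho rho0 rho1 t * (1 - rho rho0 rho1 t)) * (g1 - g0)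
          = t * (1 - t) * (rho1 - rho0) * (p10 - p00)).
  { transitivity ((1 - rho rho0 rho1 t) * (rho rho0 rho1 t * g1)
                  - rho rho0 rho1 t * ((1 - rho rho0 rho1 t) * g0)); [ring|].
    rewrite E1, E0. unfold N1, N0, rho. ring. }
  assert (0 <= t * (1 - t) * (rho1 - rho0) * (p10 - p00)).
  { apply Rmult_le_pos; [apply Rmult_le_pos; [apply Rmult_le_pos|]|]; lra. }
  assert (0 < rho rho0 rho1 t * (1 - rho rho0 rho1 t)) by (apply Rmult_lt_0_compat; lra).
  destruct (Rle_or_lt g0 g1); auto.
  set (a := rho rho0 rho1 t * (1 - rho rho0 rho1 t)) in *.
  assert (a * (g1 - g0) < 0) by nra. lra.
Qed.

Lemma slope_bound p00 p10 rho0 rho1 q0 q1 m0 m1 W0 W1 L :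
  0 <= rho0 -> rho0 <= rho1 -> rho1 <= 1 -> p00 <= p10 ->
  p00 <= q0 -> q1 <= p10 -> m0 <= m1 ->
  -L <= m0 <= L -> -L <= m1 <= L ->
  W0 + m0 * (q1 - q0) <= W1 -> W1 + m1 * (q0 - q1) <= W0 ->
  -(p10 - p00) * L <=
    (rho1 - rho0) * ((W0 - m0 * q0) - (W1 - m1 * q1))
    + m1 * (rho0 * p00 - rho1 * p10) + m0 * ((1 - rho0) * p00 - (1 - rho1) * p10)
  <= (p10 - p00) * L.
Proof.
  intros. split.
  - replace ((rho1 - rho0) * ((W0 - m0 * q0) - (W1 - m1 * q1))
    + m1 * (rho0 * p00 - rho1 * p10) + m0 * ((1 - rho0) * p00 - (1 - rho1) * p10))
    with ((rho1 - rho0) * ((W0 - W1 + m1 * q1 - m0 * q0) - (m1 - m0) * p00)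
          - (p10 - p00) * (rho1 * m1 + (1 - rho1) * m0)) by ring.
    assert (0 <= (m1 - m0) * (q0 - p00)) by (apply Rmult_le_pos; lra).
    assert (0 <= (W0 - W1 + m1 * q1 - m0 * q0) - (m1 - m0) * p00) by nra.
    assert (0 <= (rho1 - rho0) * ((W0 - W1 + m1 * q1 - m0 * q0) - (m1 - m0) * p00))
      by (apply Rmult_le_pos; lra).
    assert (rho1 * m1 + (1 - rho1) * m0 <= L) by nra.
    assert ((p10 - p00) * (rho1 * m1 + (1 - rho1) * m0) <= (p10 - p00) * L)
      by (apply Rmult_le_compat_l; lra).
    lra.
  - replace ((rho1 - rho0) * ((W0 - m0 * q0) - (W1 - m1 * q1))
    + m1 * (rho0 * p00 - rho1 * p10) + m0 * ((1 - rho0) * p00 - (1 - rho1) * p10))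
    with ((rho1 - rho0) * ((W0 - W1 + m1 * q1 - m0 * q0) - (m1 - m0) * p10)
          - (p10 - p00) * (rho0 * m1 + (1 - rho0) * m0)) by ring.
    assert (0 <= (m1 - m0) * (p10 - q1)) by (apply Rmult_le_pos; lra).
    assert ((W0 - W1 + m1 * q1 - m0 * q0) - (m1 - m0) * p10 <= 0) by nra.
    assert ((rho1 - rho0) * ((W0 - W1 + m1 * q1 - m0 * q0) - (m1 - m0) * p10) <= 0).
    { assert (0 <= (rho1 - rho0) * (-((W0 - W1 + m1 * q1 - m0 * q0) - (m1 - m0) * p10)))
        by (apply Rmult_le_pos; lra). lra. }
    assert (-L <= rho0 * m1 + (1 - rho0) * m0) by nra.
    assert ((p10 - p00) * (-L) <= (p10 - p00) * (rho0 * m1 + (1 - rho0) * m0))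
      by (apply Rmult_le_compat_l; lra).
    lra.
Qed.

Lemma fW_core p00 p10 rho0 rho1 (W : R -> R) t q0 q1 m0 m1 :
  0 <= p00 <= 1 -> 0 <= p10 <= 1 -> 0 <= rho0 <= 1 -> 0 <= rho1 <= 1 -> p00 <= p10 ->
  0 <= t <= 1 -> 0 <= q0 <= 1 -> 0 <= q1 <= 1 ->
  (forall s, 0 <= s <= 1 -> W q0 + m0 * (s - q0) <= W s) ->
  (forall s, 0 <= s <= 1 -> W q1 + m1 * (s - q1) <= W s) ->
  (rho rho0 rho1 t = 0 \/ q1 = gamma1 p00 p10 rho0 rho1 t) ->
  (1 - rho rho0 rho1 t = 0 \/ q0 = gamma0 p00 p10 rho0 rho1 t) ->
  forall s, 0 <= s <= 1 ->
    fW p00 p10 rho0 rho1 W t +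
    ((rho1 - rho0) * ((W q0 - m0 * q0) - (W q1 - m1 * q1))
    + m1 * (rho0 * p00 - rho1 * p10) + m0 * ((1 - rho0) * p00 - (1 - rho1) * p10)) * (s - t)
    <= fW p00 p10 rho0 rho1 W s.
Proof.
  intros H00 H10 Hr0 Hr1 Hp Ht Hq0 Hq1 S0 S1 C1 C0 s Hs.
  set (A := fun pi => rho rho0 rho1 pi * (W q1 - m1 * q1) + m1 * N1 p00 p10 rho0 rho1 pi
          + (1 - rho rho0 rho1 pi) * (W q0 - m0 * q0) + m0 * N0 p00 p10 rho0 rho1 pi).
  assert (E3 : A s - A t =
    ((rho1 - rho0) * ((W q0 - m0 * q0) - (W q1 - m1 * q1))
    + m1 * (rho0 * p00 - rho1 * p10) + m0 * ((1 - rho0) * p00 - (1 - rho1) * p10)) * (s - t)).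
  { unfold A, rho, N1, N0. ring. }
  assert (E1 : fW p00 p10 rho0 rho1 W t = A t).
  { pose proof (w1g1 p00 p10 rho0 rho1 t H00 H10 Hr0 Hr1 Ht) as e1.
    pose proof (w0g0 p00 p10 rho0 rho1 t H00 H10 Hr0 Hr1 Ht) as e0.
    unfold fW, A. rewrite <- e1, <- e0.
    assert (rho rho0 rho1 t * W (gamma1 p00 p10 rho0 rho1 t) =
            rho rho0 rho1 t * (W q1 - m1 * q1) + m1 * (rho rho0 rho1 t * gamma1 p00 p10 rho0 rho1 t)).
    { destruct C1 as [C|C]; rewrite ?C; ring. }
    assert ((1 - rho rho0 rho1 t) * W (gamma0 p00 p10 rho0 rho1 t) =
            (1 - rho rho0 rho1 t) * (W q0 - m0 * q0) + m0 * ((1 - rho rho0 rho1 t) * gamma0 p00 p10 rho0 rho1 t)).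
    { destruct C0 as [C|C]; rewrite ?C; ring. }
    lra. }
  assert (E2 : A s <= fW p00 p10 rho0 rho1 W s).
  { pose proof (w1g1 p00 p10 rho0 rho1 s H00 H10 Hr0 Hr1 Hs) as e1.
    pose proof (w0g0 p00 p10 rho0 rho1 s H00 H10 Hr0 Hr1 Hs) as e0.
    pose proof (rho_range rho0 rho1 s Hr0 Hr1 Hs) as Hrs.
    pose proof (S1 _ (g1_01 p00 p10 rho0 rho1 s H00 H10 Hr0 Hr1 Hs Hp)) as T1.
    pose proof (S0 _ (g0_01 p00 p10 rho0 rho1 s H00 H10 Hr0 Hr1 Hs Hp)) as T0.
    unfold fW, A. rewrite <- e1, <- e0.
    set (g1 := gamma1 p00 p10 rho0 rho1 s) in *.
    set (g0 := gamma0 p00 p10 rho0 rho1 s) in *.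
    set (r := rho rho0 rho1 s) in *.
    assert (0 <= r * (W g1 - (W q1 + m1 * (g1 - q1)))) by (apply Rmult_le_pos; lra).
    assert (0 <= (1 - r) * (W g0 - (W q0 + m0 * (g0 - q0)))) by (apply Rmult_le_pos; lra).
    nra. }
  lra.
Qed.

Lemma fW_gen p00 p10 rho0 rho1 L (W : R -> R) t q0 q1 m0 m1 :
  0 <= p00 <= 1 -> 0 <= p10 <= 1 -> 0 <= rho0 <= 1 -> 0 <= rho1 <= 1 -> rho0 <= rho1 ->
  p00 <= p10 ->
  0 <= t <= 1 -> 0 <= q0 <= 1 -> 0 <= q1 <= 1 ->
  (forall s, 0 <= s <= 1 -> W q0 + m0 * (s - q0) <= W s) ->
  (forall s, 0 <= s <= 1 -> W q1 + m1 * (s - q1) <= W s) ->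
  (rho rho0 rho1 t = 0 \/ q1 = gamma1 p00 p10 rho0 rho1 t) ->
  (1 - rho rho0 rho1 t = 0 \/ q0 = gamma0 p00 p10 rho0 rho1 t) ->
  p00 <= q0 -> q1 <= p10 -> m0 <= m1 -> -L <= m0 <= L -> -L <= m1 <= L ->
  exists S, -(p10 - p00) * L <= S <= (p10 - p00) * L /\
    forall s, 0 <= s <= 1 -> fW p00 p10 rho0 rho1 W t + S * (s - t) <= fW p00 p10 rho0 rho1 W s.
Proof.
  intros. eexists; split.
  - apply (slope_bound p00 p10 rho0 rho1 q0 q1 m0 m1 (W q0) (W q1) L); try lra.
    all: first [apply H8; lra | apply H9; lra].
  - apply fW_core; auto.
Qed.

Lemma fW_support p00 p10 rho0 rho1 L (W : R -> R) :
  0 <= p00 <= 1 -> 0 <= p10 <= 1 -> 0 <= rho0 <= 1 -> 0 <= rho1 <= 1 -> rho0 <= rho1 ->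
  p00 <= p10 -> Supp L W ->
  forall t, 0 <= t <= 1 ->
  exists S, -(p10 - p00) * L <= S <= (p10 - p00) * L /\
    forall s, 0 <= s <= 1 -> fW p00 p10 rho0 rho1 W t + S * (s - t) <= fW p00 p10 rho0 rho1 W s.
Proof.
  intros H00 H10 Hr0 Hr1 Hr Hp HW t Ht.
  pose proof (rho_range rho0 rho1 t Hr0 Hr1 Ht) as Hrt.
  pose proof (g1_01 p00 p10 rho0 rho1 t H00 H10 Hr0 Hr1 Ht Hp) as G1.
  pose proof (g0_01 p00 p10 rho0 rho1 t H00 H10 Hr0 Hr1 Ht Hp) as G0.
  destruct (Req_dec (rho rho0 rho1 t) 0) as [E|E].
  - (* only observation 0 matters *)
    pose proof (g0_range p00 p10 rho0 rho1 t H00 H10 Hr0 Hr1 Ht Hp ltac:(lra)) as R0.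
    set (q := gamma0 p00 p10 rho0 rho1 t) in *.
    destruct (HW q G0) as [m [Hm Hms]].
    apply (fW_gen p00 p10 rho0 rho1 L W t q q m m); auto; try (left; lra); try (right; reflexivity); lra.
  - destruct (Req_dec (1 - rho rho0 rho1 t) 0) as [E'|E'].
    + pose proof (g1_range p00 p10 rho0 rho1 t H00 H10 Hr0 Hr1 Ht Hp ltac:(lra)) as R1.
      set (q := gamma1 p00 p10 rho0 rho1 t) in *.
      destruct (HW q G1) as [m [Hm Hms]].
      apply (fW_gen p00 p10 rho0 rho1 L W t q q m m); auto; try (left; lra); try (right; reflexivity); lra.
    + pose proof (g1_range p00 p10 rho0 rho1 t H00 H10 Hr0 Hr1 Ht Hp ltac:(lra)) as R1.
      pose proof (g0_range p00 p10 rho0 rho1 t H00 H10 Hr0 Hr1 Ht Hp ltac:(lra)) as R0.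
      pose proof (g0_le_g1 p00 p10 rho0 rho1 t H00 H10 Hr0 Hr1 Ht Hp Hr ltac:(lra) ltac:(lra)) as Hle.
      set (q1 := gamma1 p00 p10 rho0 rho1 t) in *.
      set (q0 := gamma0 p00 p10 rho0 rho1 t) in *.
      destruct (HW q1 G1) as [m1 [Hm1 Hms1]].
      destruct (Req_dec q0 q1) as [Eq|Neq].
      * apply (fW_gen p00 p10 rho0 rho1 L W t q0 q1 m1 m1); auto; try (left; lra); try (right; reflexivity); try lra.
        rewrite Eq; auto.
      * destruct (HW q0 G0) as [m0 [Hm0 Hms0]].
        assert (m0 <= m1).
        { pose proof (Hms0 q1 G1). pose proof (Hms1 q0 G0).
          assert (0 <= (m1 - m0) * (q1 - q0)) by nra.
          destruct (Rle_or_lt m0 m1); auto.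
          assert (0 < (m0 - m1) * (q1 - q0)) by (apply Rmult_lt_0_compat; lra). lra. }
        apply (fW_gen p00 p10 rho0 rho1 L W t q0 q1 m0 m1); auto; try (left; lra); try (right; reflexivity); lra.
Qed.

Lemma T_supp p00 p10 rho0 rho1 R0 R1 eta beta K L (W : R -> R) :
  0 <= p00 <= 1 -> 0 <= p10 <= 1 -> 0 <= rho0 <= 1 -> 0 <= rho1 <= 1 -> rho0 <= rho1 ->
  p00 <= p10 -> R0 <= R1 -> 0 < beta < 1 -> 0 <= L ->
  (R1 - R0) + beta * ((p10 - p00) * L) <= L ->
  Supp L W -> Supp L (TW p00 p10 rho0 rho1 R0 R1 eta beta K W).
Proof.
  intros H00 H10 Hr0 Hr1 Hr Hp HR Hb HL HLe HW t Ht.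
  destruct (fW_support p00 p10 rho0 rho1 L W H00 H10 Hr0 Hr1 Hr Hp HW t Ht) as [S [HS HSs]].
  pose proof (gamma2_range p00 p10 K H00 H10 t Ht) as G2.
  destruct (HW _ G2) as [m [Hm Hms]].
  unfold TW.
  destruct (Rle_dec (eta + beta * W (gamma2 p00 p10 K t))
                    (R_S R0 R1 t + beta * fW p00 p10 rho0 rho1 W t)) as [D|D].
  - rewrite Rmax_left by lra.
    exists (-(R1 - R0) + beta * S). split.
    + assert (beta * S <= beta * ((p10 - p00) * L)) by (apply Rmult_le_compat_l; lra).
      assert (beta * (-(p10 - p00) * L) <= beta * S) by (apply Rmult_le_compat_l; lra).
      assert (0 <= beta * ((p10 - p00) * L)) by
        (apply Rmult_le_pos; [lra| apply Rmult_le_pos; lra]).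
      nra.
    + intros s Hs. eapply Rle_trans; [|apply Rmax_l].
      pose proof (HSs s Hs).
      assert (0 <= beta * (fW p00 p10 rho0 rho1 W s - (fW p00 p10 rho0 rho1 W t + S * (s - t))))
        by (apply Rmult_le_pos; lra).
      unfold R_S. nra.
  - rewrite Rmax_right by lra.
    set (d := (p00 - p10) ^ K).
    assert (Hd : Rabs d <= 1).
    { unfold d; rewrite <- RPow_abs. apply pow_abs_le1. split; [apply Rabs_pos|].
      split_Rabs; lra. }
    exists (beta * m * d). split.
    + apply Rabs_inv_le. rewrite !Rabs_mult, (Rabs_pos_eq beta) by lra.
      assert (Rabs m <= L) by (apply Rabs_le; lra).
      pose proof (Rabs_pos m). pose proof (Rabs_pos d).
      assert (Rabs m * Rabs d <= L * 1) by (apply Rmult_le_compat; lra).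
      assert (beta * (Rabs m * Rabs d) <= 1 * (Rabs m * Rabs d)) by
        (apply Rmult_le_compat_r; [apply Rmult_le_pos|]; lra).
      nra.
    + intros s Hs. eapply Rle_trans; [|apply Rmax_r].
      pose proof (Hms _ (gamma2_range p00 p10 K H00 H10 s Hs)).
      pose proof (gamma2_diff p00 p10 K s t). fold d in H0.
      assert (0 <= beta * (W (gamma2 p00 p10 K s) - (W (gamma2 p00 p10 K t) +
               m * (gamma2 p00 p10 K s - gamma2 p00 p10 K t)))) by (apply Rmult_le_pos; lra).
      rewrite H0 in H1. nra.
Qed.

Lemma fW_close p00 p10 rho0 rho1 (V W : R -> R) e :
  0 <= p00 <= 1 -> 0 <= p10 <= 1 -> 0 <= rho0 <= 1 -> 0 <= rho1 <= 1 -> p00 <= p10 ->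
  (forall pi, 0 <= pi <= 1 -> Rabs (V pi - W pi) <= e) ->
  forall t, 0 <= t <= 1 ->
  Rabs (fW p00 p10 rho0 rho1 V t - fW p00 p10 rho0 rho1 W t) <= e.
Proof.
  intros H00 H10 Hr0 Hr1 Hp HVW t Ht.
  pose proof (rho_range rho0 rho1 t Hr0 Hr1 Ht) as Hrt.
  pose proof (HVW _ (g1_01 p00 p10 rho0 rho1 t H00 H10 Hr0 Hr1 Ht Hp)) as A1.
  pose proof (HVW _ (g0_01 p00 p10 rho0 rho1 t H00 H10 Hr0 Hr1 Ht Hp)) as A0.
  unfold fW.
  set (r := rho rho0 rho1 t) in *.
  set (a := V (gamma1 p00 p10 rho0 rho1 t) - W (gamma1 p00 p10 rho0 rho1 t)) in *.
  set (b := V (gamma0 p00 p10 rho0 rho1 t) - W (gamma0 p00 p10 rho0 rho1 t)) in *.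
  replace (r * V (gamma1 p00 p10 rho0 rho1 t) + (1 - r) * V (gamma0 p00 p10 rho0 rho1 t) -
   (r * W (gamma1 p00 p10 rho0 rho1 t) + (1 - r) * W (gamma0 p00 p10 rho0 rho1 t)))
   with (r * a + (1 - r) * b) by (unfold a, b; ring).
  eapply Rle_trans; [apply Rabs_triang|].
  rewrite !Rabs_mult, (Rabs_pos_eq r), (Rabs_pos_eq (1 - r)) by lra.
  assert (r * Rabs a <= r * e) by (apply Rmult_le_compat_l; lra).
  assert ((1 - r) * Rabs b <= (1 - r) * e) by (apply Rmult_le_compat_l; lra).
  lra.
Qed.

Lemma T_close p00 p10 rho0 rho1 R0 R1 eta beta K (V W : R -> R) e :
  0 <= p00 <= 1 -> 0 <= p10 <= 1 -> 0 <= rho0 <= 1 -> 0 <= rho1 <= 1 -> p00 <= p10 ->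
  0 < beta < 1 ->
  (forall pi, 0 <= pi <= 1 -> Rabs (V pi - W pi) <= e) ->
  forall t, 0 <= t <= 1 ->
  Rabs (TW p00 p10 rho0 rho1 R0 R1 eta beta K V t - TW p00 p10 rho0 rho1 R0 R1 eta beta K W t)
    <= beta * e.
Proof.
  intros H00 H10 Hr0 Hr1 Hp Hb HVW t Ht.
  unfold TW. apply Rmax_diff.
  - replace (R_S R0 R1 t + beta * fW p00 p10 rho0 rho1 V t -
      (R_S R0 R1 t + beta * fW p00 p10 rho0 rho1 W t))
      with (beta * (fW p00 p10 rho0 rho1 V t - fW p00 p10 rho0 rho1 W t)) by ring.
    rewrite Rabs_mult, (Rabs_pos_eq beta) by lra.
    apply Rmult_le_compat_l; [lra|]. apply fW_close; auto.
  - replace (eta + beta * V (gamma2 p00 p10 K t) - (eta + beta * W (gamma2 p00 p10 K t)))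
      with (beta * (V (gamma2 p00 p10 K t) - W (gamma2 p00 p10 K t))) by ring.
    rewrite Rabs_mult, (Rabs_pos_eq beta) by lra.
    apply Rmult_le_compat_l; [lra|]. apply HVW. apply gamma2_range; auto.
Qed.

Fixpoint iterW p00 p10 rho0 rho1 R0 R1 eta beta K (n : nat) : R -> R :=
  match n with
  | O => fun _ => 0
  | S n => TW p00 p10 rho0 rho1 R0 R1 eta beta K (iterW p00 p10 rho0 rho1 R0 R1 eta beta K n)
  end.

Theorem lemma6 (p00 p10 rho0 rho1 R0 R1 eta beta : R) (K : nat)
    (VS VNS V : R -> R) :
  0 <= p00 <= 1 -> 0 <= p10 <= 1 ->
  0 <= rho0 <= 1 -> 0 <= rho1 <= 1 ->
  rho0 < rho1 -> R0 < R1 ->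
  0 < beta < 1 ->
  (1 < K)%nat ->
  p00 < p10 ->
  bellman_solution p00 p10 rho0 rho1 R0 R1 eta beta K VS VNS V ->
  let b := Rmin 1 ((R1 - R0) / (rho1 - rho0)) in
  ((0 < p10 - p00 < b / 5) \/ (beta < b / 5)) ->
  forall x y, 0 <= x -> x <= y -> y <= 1 ->
    VS y - VNS y <= VS x - VNS x.
Proof.
  intros H00 H10 Hr0 Hr1 Hr HR Hb HK Hp HB b Hcase x y Hx Hxy Hy.
  destruct HB as [[M HM] [HVS [HVNS HV]]].
  assert (Hb1 : b <= 1) by (unfold b; apply Rmin_l).
  set (dl := p10 - p00).
  assert (Hdl : 0 < dl <= 1) by (unfold dl; lra).
  assert (H3 : 3 * (beta * dl) <= 1).
  { destruct Hcase as [Hc|Hc].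
    - assert (beta * dl <= 1 * dl) by (apply Rmult_le_compat_r; lra). unfold dl in *; lra.
    - assert (beta * dl <= beta * 1) by (apply Rmult_le_compat_l; lra). lra. }
  assert (Hbd : 0 < beta * dl) by (apply Rmult_lt_0_compat; lra).
  set (L := (R1 - R0) / (1 - beta * dl)).
  assert (HLeq : L * (1 - beta * dl) = R1 - R0) by (unfold L; field; lra).
  assert (HL : 0 <= L) by (unfold L; apply Rle_mult_inv_pos; lra).
  assert (HLe : (R1 - R0) + beta * ((p10 - p00) * L) <= L) by (fold dl; nra).
  assert (HM0 : 0 <= M) by (pose proof (HM 0 ltac:(lra)); pose proof (Rabs_pos (V 0)); lra).
  set (It := iterW p00 p10 rho0 rho1 R0 R1 eta beta K).
  assert (HSupp : forall n, Supp L (It n)).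
  { induction n.
    - intros t Ht. exists 0. split; [lra|]. intros s Hs. unfold It; simpl. lra.
    - simpl. apply T_supp; auto; lra. }
  assert (Hfix : forall pi, 0 <= pi <= 1 -> V pi = TW p00 p10 rho0 rho1 R0 R1 eta beta K V pi).
  { intros pi Hpi. unfold TW, fW. rewrite HV, HVS, HVNS by auto. reflexivity. }
  assert (Hclose : forall n pi, 0 <= pi <= 1 -> Rabs (V pi - It n pi) <= beta ^ n * M).
  { induction n; intros pi Hpi.
    - simpl. rewrite Rminus_0_r. pose proof (HM pi Hpi). lra.
    - simpl. rewrite Hfix by auto.
      replace (beta * beta ^ n * M) with (beta * (beta ^ n * M)) by ring.
      apply T_close; auto; lra. }
  assert (HVSe : forall pi, 0 <= pi <= 1 -> VS pi = R_S R0 R1 pi + beta * fW p00 p10 rho0 rho1 V pi).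
  { intros pi Hpi. rewrite HVS by auto. reflexivity. }
  assert (Hg2 : forall pi, 0 <= pi <= 1 -> 0 <= gamma2 p00 p10 K pi <= 1)
    by (apply gamma2_range; auto).
  assert (Hd : Rabs ((p00 - p10) ^ K) <= dl).
  { rewrite <- RPow_abs. replace (Rabs (p00 - p10)) with dl by (unfold dl; split_Rabs; lra).
    destruct K as [|K']; [lia|]. simpl.
    pose proof (pow_abs_le1 dl K' ltac:(lra)). nra. }
  assert (Hmain : forall eps, 0 < eps -> VS y - VNS y <= VS x - VNS x + eps).
  { intros eps Heps.
    destruct (pow_lt_1_zero beta ltac:(rewrite Rabs_pos_eq; lra) (eps / (4 * (M + 1))))
      as [n Hn].
    { apply Rdiv_lt_0_compat; lra. }
    specialize (Hn n (Nat.le_refl n)). rewrite Rabs_pos_eq in Hn by (apply pow_le; lra).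
    set (e := beta ^ n * M).
    assert (He0 : 0 <= e) by (unfold e; apply Rmult_le_pos; [apply pow_le|]; lra).
    assert (He : 4 * e < eps).
    { assert (beta ^ n * M <= beta ^ n * (M + 1)) by
        (apply Rmult_le_compat_l; [apply pow_le|]; lra).
      assert (beta ^ n * (4 * (M + 1)) < eps).
      { apply (Rmult_lt_compat_r (4 * (M + 1))) in Hn; [|lra].
        unfold Rdiv in Hn. rewrite Rmult_assoc, Rinv_l in Hn by lra. lra. }
      unfold e. nra. }
    set (W := It n).
    assert (HVW : forall pi, 0 <= pi <= 1 -> Rabs (V pi - W pi) <= e) by (intros; apply Hclose; auto).
    assert (Hx1 : 0 <= x <= 1) by lra. assert (Hy1 : 0 <= y <= 1) by lra.
    assert (A1 : fW p00 p10 rho0 rho1 V y - fW p00 p10 rho0 rho1 V x <= dl * L * (y - x) + 2 * e).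
    { pose proof (Rabs_inv_le _ _ (fW_close p00 p10 rho0 rho1 V W e H00 H10 Hr0 Hr1 ltac:(lra) HVW x Hx1)).
      pose proof (Rabs_inv_le _ _ (fW_close p00 p10 rho0 rho1 V W e H00 H10 Hr0 Hr1 ltac:(lra) HVW y Hy1)).
      destruct (fW_support p00 p10 rho0 rho1 L W H00 H10 Hr0 Hr1 ltac:(lra) ltac:(lra) (HSupp n) y Hy1)
        as [S [HS HSs]].
      pose proof (HSs x Hx1).
      assert (S * (y - x) <= dl * L * (y - x)) by (apply Rmult_le_compat_r; unfold dl; lra).
      nra. }
    assert (A2 : V (gamma2 p00 p10 K x) - V (gamma2 p00 p10 K y) <= dl * L * (y - x) + 2 * e).
    { pose proof (Rabs_inv_le _ _ (HVW _ (Hg2 x Hx1))).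
      pose proof (Rabs_inv_le _ _ (HVW _ (Hg2 y Hy1))).
      destruct (HSupp n _ (Hg2 x Hx1)) as [m [Hm Hms]]. fold W in Hms.
      pose proof (Hms _ (Hg2 y Hy1)).
      rewrite gamma2_diff in H1.
      assert (Rabs (m * (p00 - p10) ^ K) <= L * dl).
      { rewrite Rabs_mult. apply Rmult_le_compat; try apply Rabs_pos; auto.
        apply Rabs_le; lra. }
      apply Rabs_inv_le in H2.
      assert (- (m * (p00 - p10) ^ K) * (y - x) <= L * dl * (y - x)) by
        (apply Rmult_le_compat_r; lra).
      nra. }
    rewrite !HVSe by auto. rewrite !HVNS by auto.
    assert (Hbeta1 : beta * (fW p00 p10 rho0 rho1 V y - fW p00 p10 rho0 rho1 V x) <=
                     beta * (dl * L * (y - x) + 2 * e)) by (apply Rmult_le_compat_l; lra).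
    assert (Hbeta2 : beta * (V (gamma2 p00 p10 K x) - V (gamma2 p00 p10 K y)) <=
                     beta * (dl * L * (y - x) + 2 * e)) by (apply Rmult_le_compat_l; lra).
    assert (Hpos : 0 <= (y - x) * (L * (1 - 3 * (beta * dl)))) by
      (apply Rmult_le_pos; [lra| apply Rmult_le_pos; lra]).
    assert (beta * e <= e) by nra.
    unfold R_S. nra. }
  destruct (Rle_or_lt (VS y - VNS y) (VS x - VNS x)) as [Hok|Hlt]; auto.
  specialize (Hmain ((VS y - VNS y - (VS x - VNS x)) / 2) ltac:(lra)). lra.
Qed.
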